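(* Fix $\alpha\ge0$ and set $\mathsf{INR}=\mathsf{SNR}^\alpha$. Assume that for all sufficiently large $\mathsf{SNR}$ the equation $$2\mathsf{SNR}^{\frac{3\alpha+1}{2}}\rho^4+\mathsf{SNR}^{\alpha}\rho^3-4\left(\mathsf{SNR}^{\frac{3\alpha+1}{2}}+\mathsf{SNR}^{\frac{\alpha+1}{2}}\right)\rho^2-(2+\mathsf{SNR}+2\mathsf{SNR}^\alpha)\rho+2\left(\mathsf{SNR}^{\frac{3\alpha+1}{2}}+\mathsf{SNR}^{\frac{\alpha+1}{2}}\right)=0$$ has a unique solution $\rho^*=\rho^*(\mathsf{SNR})\in(0,1)$, and define $$R_{\mathsf{sym}}(\mathsf{SNR})=\log\left(\frac{1+\mathsf{SNR}+\mathsf{SNR}^\alpha+2\rho^*\mathsf{SNR}^{\frac{\alpha+1}{2}}}{1+(1-\rho^{*2})\mathsf{SNR}^\alpha}\right).$$ Then $\lim_{\mathsf{SNR}\to\infty}R_{\mathsf{sym}}(\mathsf{SNR})/\log\mathsf{SNR}=\underline{d}(\alpha)$, where $\underline{d}(\alpha)=1-\alpha$ for $0\le\alpha<\frac13$, $\underline{d}(\alpha)=\frac{3-\alpha}{4}$ for $\frac13\le\alpha<1$, and $\underline{d}(\alpha)=\frac{1+\alpha}{4}$ for $\alpha\ge1$.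
   Context: $R_{\mathsf{sym}}(\mathsf{SNR})$ is the symmetric rate of Kramer's feedback scheme for the symmetric two-user Gaussian interference channel with feedback, with $\mathsf{SNR}$ the direct-link and $\mathsf{INR}$ the cross-link signal-to-noise ratio. Logarithms base 2. *)

(* Defs.v *)
From Stdlib Require Import Reals.
Open Scope R_scope.

Definition log2 (x : R) : R := ln x / ln 2.

(* the quartic whose root in (0,1) is rho* ; INR = SNR^alpha *)
Definition kramer_poly (alpha S rho : R) : R :=
  2 * Rpower S ((3 * alpha + 1) / 2) * rho ^ 4
  + Rpower S alpha * rho ^ 3
  - 4 * (Rpower S ((3 * alpha + 1) / 2) + Rpower S ((alpha + 1) / 2)) * rho ^ 2
  - (2 + S + 2 * Rpower S alpha) * rho
  + 2 * (Rpower S ((3 * alpha + 1) / 2) + Rpower S ((alpha + 1) / 2)).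

(* symmetric rate of Kramer's scheme, given rho = rho*(SNR) *)
Definition R_sym (alpha S rho : R) : R :=
  log2 ((1 + S + Rpower S alpha + 2 * rho * Rpower S ((alpha + 1) / 2))
        / (1 + (1 - rho ^ 2) * Rpower S alpha)).

Definition d_low (alpha : R) : R :=
  if Rlt_dec alpha (1/3) then 1 - alpha
  else if Rlt_dec alpha 1 then (3 - alpha) / 4
  else (1 + alpha) / 4.

(* Main.v *)
Require Import Defs.
From Stdlib Require Import Reals Lra Psatz.
Open Scope R_scope.

Lemma exp_mono x y : x <= y -> exp x <= exp y.
Proof. intros [H|H]; [left; apply exp_increasing; auto | subst; lra]. Qed.

Lemma gen_D A C T u K : A > 0 -> C >= T -> T >= 1 -> 0 < u <= 1 -> K > 0 ->
  2*A*u^2 <= 7*K -> K*C^2 = T^2*A -> (u >= 1/2 \/ 4*A*u^2 >= K) ->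
  T/2 <= 1 + u*C <= 3*T.
Proof.
  intros HA HC HT Hu HK H1 H2 H3.
  assert (E1 : 2*A*(u*C)^2 <= 7*T^2*A).
  { replace (2*A*(u*C)^2) with ((2*A*u^2)*C^2) by ring.
    replace (7*T^2*A) with ((7*K)*C^2) by (replace (7*T^2*A) with (7*(T^2*A)) by ring; rewrite <- H2; ring).
    apply Rmult_le_compat_r; [nra|lra]. }
  assert (E2 : (u*C)^2 <= 4*T^2) by nra.
  assert (E3 : u*C <= 2*T) by nra.
  split; [|lra].
  destruct H3 as [H3|H3].
  - nra.
  - assert (E4 : 4*A*(u*C)^2 >= T^2*A).
    { replace (4*A*(u*C)^2) with ((4*A*u^2)*C^2) by ring. rewrite <- H2.
      apply Rle_ge; apply Rmult_le_compat_r; [nra|lra]. }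
    assert (E5 : 4*(u*C)^2 >= T^2).
    { apply Rle_ge, (Rmult_le_reg_r A); [lra|]. lra. }
    assert (0 <= u*C) by nra. nra.
Qed.

Lemma poly_facts A B C S r : A>0 -> B>0 -> C>0 -> S>0 -> 0<r<1 ->
  2*A*r^4 + C*r^3 - 4*(A+B)*r^2 - (2+S+2*C)*r + 2*(A+B) = 0 ->
  2*A*(1-r^2)^2 <= 2*B+2+S+2*C /\ (1-r^2 >= 1/2 \/ 4*A*(1-r^2)^2 >= S+C).
Proof.
  intros HA HB HC HS Hr Hp.
  assert (Id : 2*A*(1-r^2)^2 = 2*B*(2*r^2-1) + (2+S+2*C)*r - C*r^3) by nra.
  split.
  - rewrite Id. assert (r^2 < 1) by nra. assert (0 < r^3) by (apply pow_lt; lra). nra.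
  - destruct (Rle_dec (1/2) (1-r^2)) as [h|h]; [left; lra|right].
    assert (r > 1/2) by nra.
    assert (2*r^2-1 > 0) by nra.
    assert (r^3 <= r) by (assert (r^2 <= 1) by nra; nra).
    nra.
Qed.

Lemma fin N D P T E : P <= N <= 5*P -> T/2 <= D <= 3*T -> T > 0 -> P = E*T -> E > 0 ->
  E/3 <= N/D <= 10*E.
Proof.
  intros HN HD HT HP HE. assert (HD0 : D > 0) by lra.
  split.
  - apply (Rmult_le_reg_r D); [lra|]. replace (N/D*D) with N by (field; lra). nra.
  - apply (Rmult_le_reg_r D); [lra|]. replace (N/D*D) with N by (field; lra). nra.
Qed.

Lemma key a S r : 0 <= a -> 1 < S -> 0 < r < 1 -> kramer_poly a S r = 0 ->
  exp (d_low a * ln S) / 3 <=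
  (1 + S + Rpower S a + 2 * r * Rpower S ((a + 1) / 2)) / (1 + (1 - r ^ 2) * Rpower S a)
  <= 10 * exp (d_low a * ln S).
Proof.
  intros Ha HS1 Hr Hp. unfold kramer_poly, Rpower in *.
  assert (HL : 0 < ln S) by (rewrite <- ln_1; apply ln_increasing; lra).
  assert (HSe : exp (1 * ln S) = S) by (rewrite Rmult_1_l; apply exp_ln; lra).
  set (L := ln S) in *.
  assert (HA := exp_pos ((3 * a + 1) / 2 * L)).
  assert (HB := exp_pos ((a + 1) / 2 * L)).
  assert (HC := exp_pos (a * L)).
  assert (HC1 : 1 <= exp (a*L)) by (apply Rle_trans with (exp 0); [rewrite exp_0; lra|apply exp_mono; nra]).
  destruct (poly_facts _ _ _ S r HA HB HC ltac:(lra) Hr Hp) as [F1 F2].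
  assert (Hu : 0 < 1 - r^2 <= 1) by nra.
  unfold d_low. destruct (Rlt_dec a (1/3)) as [h1|h1].
  -
    assert (CS : exp (a*L) <= S) by (rewrite <- HSe; apply exp_mono; nra).
    assert (BS : exp ((a+1)/2*L) <= S) by (rewrite <- HSe; apply exp_mono; nra).
    assert (AS : exp ((3*a+1)/2*L) < S) by (rewrite <- HSe; apply exp_increasing; nra).
    assert (Hu2 : 1 - r^2 >= 1/2).
    { destruct F2 as [F2|F2]; auto. destruct (Rle_dec (1/2) (1-r^2)); [lra|].
      assert ((1-r^2)^2 < 1/4) by nra. nra. }
    apply (fin _ _ S (exp (a*L)) (exp ((1-a)*L))).
    + nra.
    + apply (gen_D (exp ((3*a+1)/2*L)) (exp (a*L)) (exp (a*L)) (1-r^2) (exp ((3*a+1)/2*L)));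
        try lra.
      assert ((1-r^2)^2 <= 1) by nra. nra.
    + lra.
    + rewrite <- HSe, <- exp_plus. f_equal. field.
    + apply exp_pos.
  - destruct (Rlt_dec a 1) as [h2|h2].
    + assert (CS : exp (a*L) <= S) by (rewrite <- HSe; apply exp_mono; nra).
      assert (BS : exp ((a+1)/2*L) <= S) by (rewrite <- HSe; apply exp_mono; nra).
      assert (HT1 : 1 <= exp ((a+1)/4*L)) by (apply Rle_trans with (exp 0); [rewrite exp_0; lra|apply exp_mono; nra]).
      assert (CT : exp (a*L) >= exp ((a+1)/4*L)) by (apply Rle_ge, exp_mono; nra).
      assert (Id : S * exp (a*L)^2 = exp ((a+1)/4*L)^2 * exp ((3*a+1)/2*L)).
      { rewrite <- HSe.
        replace (exp (1*L) * exp (a*L)^2) with (exp (1*L + a*L + a*L)) by (rewrite !exp_plus; ring).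
        replace (exp ((a+1)/4*L)^2 * exp ((3*a+1)/2*L)) with (exp ((a+1)/4*L + (a+1)/4*L + (3*a+1)/2*L)) by (rewrite !exp_plus; ring).
        f_equal. field. }
      apply (fin _ _ S (exp ((a+1)/4*L)) (exp ((3-a)/4*L))).
      * nra.
      * apply (gen_D (exp ((3*a+1)/2*L)) (exp (a*L)) (exp ((a+1)/4*L)) (1-r^2) S);
          try lra.
        all: try (destruct F2; [left|right]; lra).
      * apply exp_pos.
      * rewrite <- HSe, <- exp_plus. f_equal. field.
      * apply exp_pos.
    + assert (CS : S <= exp (a*L)) by (rewrite <- HSe; apply exp_mono; nra).
      assert (BS : exp ((a+1)/2*L) <= exp (a*L)) by (apply exp_mono; nra).
      assert (HT1 : 1 <= exp ((3*a-1)/4*L)) by (apply Rle_trans with (exp 0); [rewrite exp_0; lra|apply exp_mono; nra]).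
      assert (CT : exp (a*L) >= exp ((3*a-1)/4*L)) by (apply Rle_ge, exp_mono; nra).
      assert (Id : exp (a*L) * exp (a*L)^2 = exp ((3*a-1)/4*L)^2 * exp ((3*a+1)/2*L)).
      { replace (exp (a*L) * exp (a*L)^2) with (exp (a*L + a*L + a*L)) by (rewrite !exp_plus; ring).
        replace (exp ((3*a-1)/4*L)^2 * exp ((3*a+1)/2*L)) with (exp ((3*a-1)/4*L + (3*a-1)/4*L + (3*a+1)/2*L)) by (rewrite !exp_plus; ring).
        f_equal. field. }
      apply (fin _ _ (exp (a*L)) (exp ((3*a-1)/4*L)) (exp ((1+a)/4*L))).
      * nra.
      * apply (gen_D (exp ((3*a+1)/2*L)) (exp (a*L)) (exp ((3*a-1)/4*L)) (1-r^2) (exp (a*L)));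
          try lra.
        all: try (destruct F2; [left|right]; lra).
      * apply exp_pos.
      * rewrite <- exp_plus. f_equal. field.
      * apply exp_pos.
Qed.

Lemma ln_mono x y : 0 < x -> x <= y -> ln x <= ln y.
Proof. intros Hx [H|H]; [left; apply ln_increasing; auto | subst; lra]. Qed.

Theorem lemma2 (alpha : R) (rho_star : R -> R) :
  0 <= alpha ->
  (exists S0 : R, forall S : R, S > S0 ->
     (0 < rho_star S < 1 /\ kramer_poly alpha S (rho_star S) = 0) /\
     (forall r : R, 0 < r < 1 -> kramer_poly alpha S r = 0 -> r = rho_star S)) ->
  forall eps : R, eps > 0 ->
    exists M : R, forall S : R, S > M ->
      Rabs (R_sym alpha S (rho_star S) / log2 S - d_low alpha) < eps.
Proof.
  intros Ha [S0 HS0] eps He.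
  exists (Rmax S0 (Rmax 1 (exp (ln 10 / eps)))).
  intros S HS.
  assert (H1 : S > S0) by (eapply Rle_lt_trans; [apply Rmax_l|exact HS]).
  assert (H2 : S > 1) by (eapply Rle_lt_trans; [|exact HS];
     eapply Rle_trans; [apply Rmax_l|apply Rmax_r]).
  assert (H3 : S > exp (ln 10 / eps)) by (eapply Rle_lt_trans; [|exact HS];
     eapply Rle_trans; [apply Rmax_r|apply Rmax_r]).
  destruct (HS0 S H1) as [[Hr Hp] _].
  set (r := rho_star S) in *.
  assert (HL : 0 < ln S) by (rewrite <- ln_1; apply ln_increasing; lra).
  assert (HL2 : ln 10 / eps < ln S) by (rewrite <- (ln_exp (ln 10 / eps)); apply ln_increasing; [apply exp_pos|lra]).
  assert (Hl2 : 0 < ln 2) by (assert (H := ln_lt_2); lra).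
  assert (Hl3 : 0 < ln 3) by (rewrite <- ln_1; apply ln_increasing; lra).
  assert (Hl310 : ln 3 <= ln 10) by (apply ln_mono; lra).
  destruct (key alpha S r Ha H2 Hr Hp) as [K1 K2].
  set (Q := (1 + S + Rpower S alpha + 2 * r * Rpower S ((alpha + 1) / 2)) / (1 + (1 - r ^ 2) * Rpower S alpha)) in *.
  set (E := exp (d_low alpha * ln S)) in *.
  assert (HE : 0 < E) by apply exp_pos.
  assert (lo : d_low alpha * ln S - ln 3 <= ln Q).
  { replace (d_low alpha * ln S - ln 3) with (ln (E / 3)).
    - apply ln_mono; [|exact K1]. lra.
    - unfold Rdiv. rewrite ln_mult, ln_Rinv by lra. unfold E. rewrite ln_exp. ring. }
  assert (hi : ln Q <= d_low alpha * ln S + ln 10).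
  { replace (d_low alpha * ln S + ln 10) with (ln (10 * E)).
    - apply ln_mono; [lra|exact K2].
    - rewrite ln_mult by lra. unfold E. rewrite ln_exp. ring. }
  assert (Eq : R_sym alpha S r / log2 S - d_low alpha = (ln Q - d_low alpha * ln S) / ln S).
  { unfold R_sym, log2. fold Q. field. split; lra. }
  rewrite Eq. unfold Rdiv. rewrite Rabs_mult, Rabs_inv, (Rabs_right (ln S)) by lra.
  apply (Rmult_lt_reg_r (ln S)); [lra|].
  rewrite Rmult_assoc, Rinv_l by lra. rewrite Rmult_1_r.
  assert (eps * ln S > ln 10).
  { apply (Rmult_lt_reg_r (/ eps)). apply Rinv_0_lt_compat; lra.
    replace (eps * ln S * / eps) with (ln S) by (field; lra). exact HL2. }
  apply Rabs_def1; lra.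
Qed.
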